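(* Let $n\ge k\ge1$, $m\ge1$. Let $(a_j,b_j)_{j\in[m]}$ be pairs with $a_j\in\mathbb{F}_2^n\setminus\{0\}$, $b_j\in\mathbb{F}_2$, and let $\varphi_j$ be the linear form $y\mapsto\langle a_j,y\rangle$. For each $j$ independently: choose $(\gamma_{j,1},\dots,\gamma_{j,k-1})$ uniformly among $(k-1)$-tuples of linear forms such that $\gamma_{j,1},\dots,\gamma_{j,k-1},\varphi_j$ are linearly independent; choose $\beta_{j,1},\dots,\beta_{j,k-1}\in\mathbb{F}_2$ uniformly and independently; choose a uniformly random permutation and let $(\ell_{j,1},\dots,\ell_{j,k})$ be $(\gamma_{j,1},\dots,\gamma_{j,k-1},\varphi_j)$ in that order and $(\varepsilon_{j,1},\dots,\varepsilon_{j,k})$ be $(\beta_{j,1},\dots,\beta_{j,k-1},1-b_j)$ in the same order; set $V_j=\{x:\ell_{j,i}(x)=\varepsilon_{j,i}\ \forall i\in[k]\}$ and $V=(V_1,\dots,V_m)$. Then: (i) if the $a_j$ are i.i.d. uniform on $\mathbb{F}_2^n\setminus\{0\}$ and the $b_j$ are i.i.d. uniform on $\mathbb{F}_2$ independent of them, then $V\sim\mathbf{P}_{\text{unif}}$; (ii) if the $a_j$ are i.i.d. uniform on $\mathbb{F}_2^n\setminus\{0\}$ and $b_j=\langle a_j,x\rangle+e_j$ for a fixed $x\in\mathbb{F}_2^n$ and i.i.d. $e_j\sim\mathrm{Bernoulli}(\eta)$ independent of the $a_j$, with $\eta\in[0,1/2)$, then $V\sim\mathbf{P}_{x,\pi}$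 with $\pi=1-2\eta$.
   Context: A $k$-flat of $\mathbb{F}_2^n$ is an affine subspace of dimension $n-k$. $q_0$ is the uniform distribution on $k$-flats; for $x\in\mathbb{F}_2^n$, $q_x$ is the uniform distribution on $k$-flats not containing $x$, and $q_{x,\pi}:=(1-\pi)q_0+\pi q_x$. $\mathbf{P}_{\text{unif}}=q_0^{\otimes m}$ and $\mathbf{P}_{x,\pi}=q_{x,\pi}^{\otimes m}$. *)

(* Defs.v *)
(* Finite probability spaces are represented by explicit
   weighted finite sums with weights in an arbitrary real field R. *)
From HB Require Import structures.
From mathcomp Require Import all_boot all_order all_algebra all_fingroup.
Set Implicit Arguments. Unset Strict Implicit. Unset Printing Implicit Defensive.
Import Order.TTheory GRing.Theory Num.Theory.
Local Open Scope ring_scope.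

Definition dotF2 (n : nat) (u y : 'rV['F_2]_n) : 'F_2 := \sum_(i < n) u 0 i * y 0 i.

Definition is_kflat (n k : nat) (S : {set 'rV['F_2]_n}) : bool :=
  [exists x0 : 'rV['F_2]_n, exists U : 'M['F_2]_n,
     (\rank U == (n - k)%N) &&
     (S == [set x0 + u | u in [set u : 'rV['F_2]_n | (u <= U)%MS]])].

Definition kflats (n k : nat) : {set {set 'rV['F_2]_n}} := [set S | is_kflat k S].

Definition unif (R : numFieldType) (T : finType) (A : {set T}) (x : T) : R :=
  if x \in A then (#|A|%:R)^-1 else 0.

Definition bern (R : numFieldType) (eta : R) (e : 'F_2) : R :=
  if e == 1 then eta else 1 - eta.

Definition q0 (R : numFieldType) (n k : nat) (S : {set 'rV['F_2]_n}) : R :=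
  @unif R _ (kflats n k) S.
Definition qx (R : numFieldType) (n k : nat) (x : 'rV['F_2]_n) (S : {set 'rV['F_2]_n}) : R :=
  @unif R _ [set T in kflats n k | x \notin T] S.
Definition qxpi (R : numFieldType) (n k : nat) (x : 'rV['F_2]_n) (pi : R)
  (S : {set 'rV['F_2]_n}) : R :=
  (1 - pi) * @q0 R n k S + pi * @qx R n k x S.

Definition P_unif (R : numFieldType) (n k m : nat) (W : {ffun 'I_m -> {set 'rV['F_2]_n}}) : R :=
  \prod_(j < m) @q0 R n k (W j).
Definition P_xpi (R : numFieldType) (n k m : nat) (x : 'rV['F_2]_n) (pi : R)
  (W : {ffun 'I_m -> {set 'rV['F_2]_n}}) : R :=
  \prod_(j < m) @qxpi R n k x pi (W j).

Definition nonzero_vecs (n : nat) : {set 'rV['F_2]_n} := [set a | a != 0].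

Definition indep_ok (n k : nat) (a : 'rV['F_2]_n) (G : k.-1.-tuple 'rV['F_2]_n) : bool :=
  row_free (\matrix_(i < k, j < n) (nth 0 (rcons (tval G) a) i) 0 j).

Definition gamma_set (n k : nat) (a : 'rV['F_2]_n) : {set k.-1.-tuple 'rV['F_2]_n} :=
  [set G | @indep_ok n k a G].

Definition Vj (n k : nat) (a : 'rV['F_2]_n) (b : 'F_2) (G : k.-1.-tuple 'rV['F_2]_n)
  (beta : k.-1.-tuple 'F_2) (s : {perm 'I_k}) : {set 'rV['F_2]_n} :=
  [set y | [forall i : 'I_k,
     dotF2 (nth 0 (rcons (tval G) a) (s i)) y == nth 0 (rcons (tval beta) (1 - b)) (s i)]].

Definition law_i (R : numFieldType) (n k m : nat) (W : {ffun 'I_m -> {set 'rV['F_2]_n}}) : R :=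
  \sum_(A : {ffun 'I_m -> 'rV['F_2]_n})
  \sum_(B : {ffun 'I_m -> 'F_2})
  \sum_(G : {ffun 'I_m -> k.-1.-tuple 'rV['F_2]_n})
  \sum_(Bt : {ffun 'I_m -> k.-1.-tuple 'F_2})
  \sum_(S : {ffun 'I_m -> {perm 'I_k}})
    (\prod_(j < m) (@unif R _ (nonzero_vecs n) (A j) * @unif R _ [set: 'F_2] (B j)
        * @unif R _ (@gamma_set n k (A j)) (G j) * @unif R _ [set: k.-1.-tuple 'F_2] (Bt j)
        * @unif R _ [set: {perm 'I_k}] (S j)))
    * ([forall j, @Vj n k (A j) (B j) (G j) (Bt j) (S j) == W j] : bool)%:R.

Definition law_ii (R : numFieldType) (n k m : nat) (x : 'rV['F_2]_n) (eta : R)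
  (W : {ffun 'I_m -> {set 'rV['F_2]_n}}) : R :=
  \sum_(A : {ffun 'I_m -> 'rV['F_2]_n})
  \sum_(E : {ffun 'I_m -> 'F_2})
  \sum_(G : {ffun 'I_m -> k.-1.-tuple 'rV['F_2]_n})
  \sum_(Bt : {ffun 'I_m -> k.-1.-tuple 'F_2})
  \sum_(S : {ffun 'I_m -> {perm 'I_k}})
    (\prod_(j < m) (@unif R _ (nonzero_vecs n) (A j) * @bern R eta (E j)
        * @unif R _ (@gamma_set n k (A j)) (G j) * @unif R _ [set: k.-1.-tuple 'F_2] (Bt j)
        * @unif R _ [set: {perm 'I_k}] (S j)))
    * ([forall j, @Vj n k (A j) (dotF2 (A j) x + E j) (G j) (Bt j) (S j) == W j] : bool)%:R.

(* Main.v *)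
Require Import Defs.
From HB Require Import structures.
From mathcomp Require Import all_boot all_order all_algebra all_fingroup.
From mathcomp Require Import ring.
Import Order.TTheory GRing.Theory Num.Theory.
Local Open Scope ring_scope.
Set Implicit Arguments. Unset Strict Implicit. Unset Printing Implicit Defensive.
Lemma F2_addxx (x : 'F_2) : x + x = 0.
Proof. by case: x => [[|[|//]]] i; apply/val_inj. Qed.
Lemma F2_cases (x : 'F_2) : x = 0 \/ x = 1.
Proof. by case: x => [[|[|//]]] i; [left|right]; apply/val_inj. Qed.
Lemma F2_opp (x : 'F_2) : - x = x.
Proof. by apply/eqP; rewrite eq_sym -subr_eq0 opprK F2_addxx. Qed.
Lemma F2_10 : (1 : 'F_2) != 0.
Proof. by []. Qed.
Lemma F2_sum (R : nmodType) (f : 'F_2 -> R) : \sum_(x : 'F_2) f x = f 0 + f 1.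
Proof.
rewrite (bigD1 0) // (bigD1 1) //= [X in _ + (_ + X)]big1 ?addr0 // => x /andP [x1 x0].
by case: (F2_cases x) => ex; rewrite ex eqxx ?andbF in x1 x0.
Qed.
Lemma mxF2_addxx m n (A : 'M['F_2]_(m,n)) : A + A = 0.
Proof. by apply/matrixP => i j; rewrite !mxE F2_addxx. Qed.
Lemma mxF2_opp m n (A : 'M['F_2]_(m,n)) : - A = A.
Proof. by apply/matrixP => i j; rewrite !mxE F2_opp. Qed.

Lemma dotE n (u y : 'rV['F_2]_n) : dotF2 u y = (u *m y^T) 0 0.
Proof. by rewrite /dotF2 mxE; apply: eq_bigr => i _; rewrite mxE. Qed.
Lemma dotC n (u y : 'rV['F_2]_n) : dotF2 u y = dotF2 y u.
Proof. by rewrite /dotF2; apply: eq_bigr => i _; rewrite mulrC. Qed.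
Lemma dot_mulmx n (u v : 'rV['F_2]_n) (M : 'M['F_2]_n) :
  dotF2 u (v *m M) = dotF2 (u *m M^T) v.
Proof. by rewrite !dotE trmx_mul mulmxA. Qed.
Lemma dotDr n (u v w : 'rV['F_2]_n) : dotF2 u (v + w) = dotF2 u v + dotF2 u w.
Proof. by rewrite !dotE linearD /= mulmxDr !mxE. Qed.
Lemma dotBr n (u v w : 'rV['F_2]_n) : dotF2 u (v - w) = dotF2 u v - dotF2 u w.
Proof. by rewrite !dotE linearB /= mulmxBr !mxE. Qed.
Lemma dot0r n (u : 'rV['F_2]_n) : dotF2 u 0 = 0.
Proof. by rewrite dotE linear0 mulmx0 mxE. Qed.
Lemma dot0l n (u : 'rV['F_2]_n) : dotF2 0 u = 0.
Proof. by rewrite dotC dot0r. Qed.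

Lemma sum_unif (R : numFieldType) (T : finType) (A : {set T}) :
  A != set0 -> \sum_x @unif R T A x = 1.
Proof.
move=> An0; rewrite /unif -big_mkcond /= sumr_const.
rewrite -[_ *+ _]mulr_natr mulVf // pnatr_eq0 -lt0n card_gt0 //.
Qed.
Unset Implicit Arguments.
Definition rowv (n k : nat) (a : 'rV['F_2]_n) (g : k.-1.-tuple 'rV['F_2]_n) (i : nat) :=
  nth 0 (rcons (tval g) a) i.
Definition rhsv (k : nat) (b : 'F_2) (bt : k.-1.-tuple 'F_2) (i : nat) :=
  nth 0 (rcons (tval bt) (1 - b)) i.
Arguments rowv {n} k a g i.
Definition V0 (n k : nat) (a : 'rV['F_2]_n) (b : 'F_2) (g : k.-1.-tuple 'rV['F_2]_n)
  (bt : k.-1.-tuple 'F_2) : {set 'rV['F_2]_n} :=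
  [set y | [forall i : 'I_k, dotF2 (rowv k a g i) y == rhsv k b bt i]].
Arguments V0 {n} k a b g bt.
Set Implicit Arguments.

Lemma Vj_V0 n k a b (g : k.-1.-tuple 'rV['F_2]_n) bt s :
  Vj a b g bt s = V0 k a b g bt.
Proof.
apply/setP => y; rewrite !inE; apply/forallP/forallP => H i.
  by have := H (s^-1 i)%g; rewrite permKV.
exact: H.
Qed.

Unset Implicit Arguments.
Definition Mx (n k : nat) (a : 'rV['F_2]_n) (g : k.-1.-tuple 'rV['F_2]_n) : 'M['F_2]_(k, n) :=
  \matrix_(i < k, j < n) (rowv k a g i) 0 j.
Arguments Mx {n} k a g.
Set Implicit Arguments.

Lemma indep_okE n k a (g : k.-1.-tuple 'rV['F_2]_n) : indep_ok a g = row_free (Mx k a g).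
Proof. by []. Qed.

Lemma imset_addE n (x0 : 'rV['F_2]_n) (S : {set 'rV['F_2]_n}) z :
  (z \in [set x0 + u | u in S]) = (z - x0 \in S).
Proof.
apply/imsetP/idP => [[u uS ->]|zS]; first by rewrite addrC addKr.
by exists (z - x0) => //; rewrite addrC subrK.
Qed.

Lemma V0_kflat n k a b (g : k.-1.-tuple 'rV['F_2]_n) bt :
  indep_ok a g -> is_kflat k (V0 k a b g bt).
Proof.
rewrite indep_okE /row_free => /eqP rk.
set M := Mx k a g.
set r : 'rV['F_2]_k := \row_(i < k) rhsv k b bt i.
have VE : V0 k a b g bt = [set y | y *m M^T == r].
  apply/setP => y; rewrite !inE; apply/forallP/eqP => [H|H i].
    apply/rowP => i; rewrite !mxE; move/eqP: (H i) <-.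
    rewrite /dotF2; apply: eq_bigr => j _; rewrite !mxE mulrC //.
  have := congr1 (fun v : 'rV['F_2]_k => v 0 i) H; rewrite !mxE => <-; apply/eqP.
  rewrite /dotF2; apply: eq_bigr => j _; rewrite !mxE mulrC //.
have full : row_full M^T by rewrite /row_full mxrank_tr rk.
set x0 := r *m pinvmx M^T.
have x0E : x0 *m M^T = r by rewrite mulmxKpV // submx_full.
apply/existsP; exists x0; apply/existsP; exists (kermx M^T).
rewrite mxrank_ker mxrank_tr rk eqxx /=; apply/eqP/setP => y.
rewrite imset_addE VE !inE sub_kermx mulmxBl x0E subr_eq0.
by [].
Qed.
Definition Estd (n k : nat) : {set 'rV['F_2]_n} :=
  [set u : 'rV['F_2]_n | (u <= (pid_mx (n - k) : 'M['F_2]_n))%MS].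
Definition Tset n (P : 'M['F_2]_n) (c : 'rV['F_2]_n) (W : {set 'rV['F_2]_n}) :
  {set 'rV['F_2]_n} := [set z | (z - c) *m invmx P \in W].

Lemma submx_unitE n m p (v : 'M['F_2]_(m, n)) (B : 'M['F_2]_(p, n)) (Q : 'M['F_2]_n) :
  Q \in unitmx -> (v <= B *m Q)%MS = (v *m invmx Q <= B)%MS.
Proof.
move=> Qu; apply/idP/idP => H.
  by rewrite -[B](mulmxK Qu) submxMr.
by rewrite -[v](mulmxKV Qu) submxMr.
Qed.

Lemma kflat_std n k (W : {set 'rV['F_2]_n}) :
  is_kflat k W -> exists P c, P \in unitmx /\ W = Tset P c (Estd n k).
Proof.
case/existsP => x0 /existsP [U /andP [/eqP rk /eqP ->]].
exists (row_ebase U), x0; split; first exact: row_ebase_unit.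
have Hf : row_full (col_ebase U) by rewrite row_full_unit col_ebase_unit.
have eqU := eqmxMfull (pid_mx (\rank U) *m row_ebase U) Hf.
rewrite mulmxA mulmx_ebase in eqU.
apply/setP => z; rewrite imset_addE !inE eqU submx_unitE ?row_ebase_unit //.
by rewrite rk.
Qed.

Lemma Tset_inj n (P : 'M['F_2]_n) c W1 W2 :
  P \in unitmx -> (Tset P c W1 == Tset P c W2) = (W1 == W2).
Proof.
move=> Pu; apply/eqP/eqP => [H|->] //; apply/setP => y.
have := congr1 (fun S : {set 'rV['F_2]_n} => y *m P + c \in S) H; rewrite /Tset !inE addrK mulmxK //.
Qed.
Definition mapQ n m (Q : 'M['F_2]_n) (g : m.-tuple 'rV['F_2]_n) : m.-tuple 'rV['F_2]_n :=
  map_tuple (fun u => u *m Q) g.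
Definition btT n m (g : m.-tuple 'rV['F_2]_n) (c : 'rV['F_2]_n) (bt : m.-tuple 'F_2) :
  m.-tuple 'F_2 := [tuple tnth bt i + dotF2 (tnth g i) c | i < m].

Lemma rowv_map n k (Q : 'M['F_2]_n) a (g : k.-1.-tuple _) i :
  rowv k (a *m Q) (mapQ Q g) i = rowv k a g i *m Q.
Proof.
rewrite /rowv /mapQ /= -map_rcons.
case: (ltnP i (size (rcons (tval g) a))) => hi; first by rewrite (nth_map 0).
by rewrite !nth_default ?size_map // mul0mx.
Qed.

Lemma rhsv_T n k (g : k.-1.-tuple 'rV['F_2]_n) a c b bt i : (0 < k)%N -> (i < k)%N ->
  rhsv k (b + dotF2 a c) (btT g c bt) i = rhsv k b bt i + dotF2 (rowv k a g i) c.
Proof.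
move=> k0 ik; rewrite /rhsv /rowv !nth_rcons !size_tuple.
case: ltnP => hi.
  rewrite -(tnth_nth 0 _ (Ordinal hi)) -(tnth_nth 0 _ (Ordinal hi)) /btT.
  by rewrite -(tnth_nth 0 _ (Ordinal hi)) tnth_mktuple.
have -> : i == k.-1 by rewrite eqn_leq hi andbT -ltnS prednK.
by rewrite opprD !F2_opp addrA.
Qed.

Lemma V0_T n k (P : 'M['F_2]_n) c a b (g : k.-1.-tuple _) bt : (0 < k)%N ->
  P \in unitmx ->
  V0 k (a *m (invmx P)^T) (b + dotF2 (a *m (invmx P)^T) c) (mapQ (invmx P)^T g)
     (btT (mapQ (invmx P)^T g) c bt) = Tset P c (V0 k a b g bt).
Proof.
move=> k0 Pu; apply/setP => z; rewrite /Tset !inE; apply: eq_forallb => i.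
rewrite rhsv_T // rowv_map dot_mulmx dotBr.
by rewrite -subr_eq.
Qed.
Lemma Mx_map n k (Q : 'M['F_2]_n) a (g : k.-1.-tuple _) :
  Mx k (a *m Q) (mapQ Q g) = Mx k a g *m Q.
Proof.
apply/matrixP => i j; rewrite !mxE rowv_map mxE.
by apply: eq_bigr => l _; rewrite !mxE.
Qed.

Lemma indep_ok_map n k (Q : 'M['F_2]_n) a (g : k.-1.-tuple _) :
  Q \in unitmx -> indep_ok (a *m Q) (mapQ Q g) = indep_ok a g.
Proof.
move=> Qu; rewrite !indep_okE Mx_map /row_free mxrankMfree //.
by rewrite row_free_unit.
Qed.

Lemma mapQK n m (Q : 'M['F_2]_n) (g : m.-tuple 'rV['F_2]_n) :
  Q \in unitmx -> mapQ (invmx Q) (mapQ Q g) = g.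
Proof.
move=> Qu; apply: eq_from_tnth => i; rewrite /mapQ !tnth_map mulmxK //.
Qed.

Lemma mapQ_inj n m (Q : 'M['F_2]_n) : Q \in unitmx -> injective (@mapQ n m Q).
Proof. by move=> Qu; apply: (can_inj (g := mapQ (invmx Q))) => g; rewrite mapQK. Qed.

Lemma btTK n m (g : m.-tuple 'rV['F_2]_n) c : involutive (btT g c).
Proof.
move=> bt; apply: eq_from_tnth => i; rewrite /btT !tnth_mktuple.
by rewrite -addrA F2_addxx addr0.
Qed.

Lemma gamma_map n k (Q : 'M['F_2]_n) a :
  Q \in unitmx -> (mapQ Q) @^-1: (gamma_set k (a *m Q)) = gamma_set k a.
Proof. by move=> Qu; apply/setP => g; rewrite !inE indep_ok_map. Qed.

Lemma unif_gam (R : numFieldType) n k (Q : 'M['F_2]_n) a (g : k.-1.-tuple _) :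
  Q \in unitmx ->
  @unif R _ (gamma_set k (a *m Q)) (mapQ Q g) = @unif R _ (gamma_set k a) g.
Proof.
move=> Qu; rewrite /unif -(gamma_map k a Qu) card_preimset; last exact: mapQ_inj.
by rewrite !inE.
Qed.

Lemma unif_nz (R : numFieldType) n (Q : 'M['F_2]_n) a :
  Q \in unitmx -> @unif R _ (nonzero_vecs n) (a *m Q) = @unif R _ (nonzero_vecs n) a.
Proof.
move=> Qu; rewrite /unif !inE; congr (if _ then _ else _).
apply/idP/idP; apply: contra => /eqP H; apply/eqP.
  by rewrite H mul0mx.
by rewrite -(mulmxK Qu a) H mul0mx.
Qed.

Definition Kin (R : numFieldType) n k (a : 'rV['F_2]_n) (b : 'F_2) (W : {set 'rV['F_2]_n}) : R :=
  \sum_(g : k.-1.-tuple 'rV['F_2]_n) \sum_(bt : k.-1.-tuple 'F_2)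
    @unif R _ (gamma_set k a) g * @unif R _ [set: k.-1.-tuple 'F_2] bt *
    (V0 k a b g bt == W)%:R.

Lemma Kin_T (R : numFieldType) n k (P : 'M['F_2]_n) c a b W : (0 < k)%N -> P \in unitmx ->
  @Kin R n k (a *m (invmx P)^T) (b + dotF2 (a *m (invmx P)^T) c) (Tset P c W) = @Kin R n k a b W.
Proof.
move=> k0 Pu; have Qu : (invmx P)^T \in unitmx by rewrite unitmx_tr unitmx_inv.
rewrite /Kin (reindex_inj (mapQ_inj (m:=k.-1) Qu)); apply: eq_bigr => g _.
rewrite (reindex_inj (inv_inj (btTK (mapQ (invmx P)^T g) c))).
apply: eq_bigr => bt _; rewrite V0_T // Tset_inj // unif_gam //.
by rewrite /unif !inE.
Qed.
Lemma pid_mulE m n p (i : 'I_m) (j : 'I_p) (U : 'M['F_2]_(n, p)) (hi : (i < n)%N) :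
  (pid_mx m *m U) i j = U (Ordinal hi) j.
Proof.
rewrite !mxE (bigD1 (Ordinal hi)) //= big1 ?addr0 => [|l].
  by rewrite !mxE eqxx ltn_ord mul1r.
by rewrite -val_eqE /= !mxE eq_sym => /negPf ->; rewrite mul0r.
Qed.

Lemma gamma_exists n k (a : 'rV['F_2]_n) : (1 <= k)%N -> (k <= n)%N -> a != 0 ->
  exists g : k.-1.-tuple 'rV['F_2]_n, indep_ok a g.
Proof.
case: k => // k _ kn a0 /=.
have n0 : (0 < n)%N by exact: leq_trans (ltn0Sn k) kn.
pose U := row_ebase a; pose C := col_ebase a.
have rk : \rank a = 1%N by rewrite rank_rV a0.
have aE := mulmx_ebase a; rewrite rk in aE; rewrite -/C -/U in aE; symmetry in aE.
have C1 : C 0 0 = 1.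
  have := col_ebase_unit a; rewrite -/C unitmxE unitfE det_mx11.
  by case: (F2_cases (C 0 0)) => ->; rewrite ?eqxx.
have aE2 : forall j, a 0 j = U (Ordinal n0) j.
  move=> j; rewrite aE -mulmxA !mxE big_ord1 C1 mul1r.
  by rewrite (@pid_mulE 1 n n 0 j U n0).
pose j0 : 'I_n := Ordinal n0; pose jl : 'I_n := Ordinal kn.
pose U2 := xrow j0 jl U.
have U2u : U2 \in unitmx by rewrite /U2 xrowE unitmx_mul unitmx_perm row_ebase_unit.
have ltk : forall i : 'I_k, (i < n)%N by move=> i; exact: ltn_trans (ltn_ord i) kn.
exists [tuple row (Ordinal (ltk i)) U2 | i < k].
rewrite indep_okE.
suff -> : Mx k.+1 a [tuple row (Ordinal (ltk i)) U2 | i < k] = pid_mx k.+1 *m U2.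
  by rewrite /row_free mxrankMfree ?row_free_unit // rank_pid_mx // leq_min leqnn.
apply/matrixP => i j.
have hi : (i < n)%N by exact: leq_trans (ltn_ord i) kn.
rewrite (@pid_mulE k.+1 n n i j U2 hi) mxE /rowv nth_rcons size_tuple.
case: ltnP => hik.
  rewrite -(tnth_nth 0 _ (Ordinal hik)) tnth_mktuple mxE.
  by congr (U2 _ j); apply/val_inj.
have -> : (i == k.+1.-1 :> nat) by rewrite eqn_leq hik -ltnS ltn_ord.
rewrite aE2 /U2 /xrow mxE.
have -> : Ordinal hi = jl by apply/val_inj => /=; apply/eqP; rewrite eqn_leq hik -ltnS ltn_ord.
by rewrite tpermR.
Qed.
Definition ev n (j : 'I_n) : 'rV['F_2]_n := \row_(l < n) ((l == j)%:R : 'F_2).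

Lemma dot_ev n (j : 'I_n) (y : 'rV['F_2]_n) : dotF2 (ev j) y = y 0 j.
Proof.
rewrite /dotF2 (bigD1 j) //= big1 ?addr0 => [|l /negPf lj]; first by rewrite mxE eqxx mul1r.
by rewrite mxE lj mul0r.
Qed.

Lemma mul_pidE n m (u : 'M['F_2]_(m, n)) r i (j : 'I_n) :
  (u *m pid_mx r) i j = u i j * ((j < r)%N)%:R.
Proof.
rewrite mxE (bigD1 j) //= big1 ?addr0 => [|l /negPf lj]; first by rewrite mxE eqxx.
rewrite mxE; case: eqP => [/val_inj lj2|_]; last by rewrite mulr0.
by rewrite lj2 eqxx in lj.
Qed.

Lemma Estd_mem n k (u : 'rV['F_2]_n) :
  (u \in Estd n k) = [forall j : 'I_n, (n - k <= j)%N ==> (u 0 j == 0)].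
Proof.
rewrite inE; apply/idP/forallP => [/submxP [D ->] j|H].
  apply/implyP => hj.
  have -> : D *m (pid_mx (n - k) : 'M_n) = (D *m pid_mx (n - k)) *m (pid_mx (n - k) : 'M_n).
    by rewrite -mulmxA pid_mx_id // leq_subr.
  by rewrite mul_pidE ltnNge hj mulr0.
have -> : u = u *m (pid_mx (n - k) : 'M_n).
  apply/rowP => j; rewrite mul_pidE; case: ltnP => hj; first by rewrite mulr1.
  by have /implyP/(_ hj)/eqP -> := H j; rewrite mul0r.
exact: submxMl.
Qed.

Lemma mx11_eq0 (A : 'M['F_2]_1) : A 0 0 = 0 -> A = 0.
Proof. by move=> H; apply/matrixP => i j; rewrite !ord1 H mxE. Qed.

Lemma invol_unit n (h d : 'rV['F_2]_n) : dotF2 h d = 0 ->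
  let P := 1%:M + h^T *m d in P *m P = 1%:M.
Proof.
move=> hd P; rewrite /P mulmxDl !mulmxDr !mul1mx mulmx1.
have -> : h^T *m d *m (h^T *m d) = 0.
  rewrite mulmxA -[h^T *m d *m h^T]mulmxA.
  have -> : d *m h^T = 0 by apply: mx11_eq0; rewrite -dotE dotC.
  by rewrite mulmx0 mul0mx.
by rewrite addr0 -addrA mxF2_addxx addr0.
Qed.

Lemma Estd_fix n k (P : 'M['F_2]_n) :
  P *m P = 1%:M -> (forall e, e \in Estd n k -> e *m P = e) ->
  P \in unitmx /\ Tset P 0 (Estd n k) = Estd n k.
Proof.
move=> PP Hfix; have Pu : P \in unitmx by case: (mulmx1_unit PP).
have iP : invmx P = P.
  by rewrite -[invmx P]mulmx1 -PP mulmxA mulVmx // mul1mx.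
split=> //; apply/setP => z; rewrite /Tset inE subr0 iP.
apply/idP/idP => H; last by rewrite Hfix.
by have := Hfix _ H; rewrite -mulmxA PP mulmx1 => ->.
Qed.

Definition pstar n : 'rV['F_2]_n.+1 := ev ord_max.

Lemma pstar_transitive n k (p : 'rV['F_2]_n.+1) : (1 <= k)%N ->
  p \notin Estd n.+1 k ->
  exists P, [/\ P \in unitmx, Tset P 0 (Estd n.+1 k) = Estd n.+1 k & pstar n *m P + 0 = p].
Proof.
move=> k1 pE.
have [h [he hs hp]] : exists h : 'rV['F_2]_n.+1,
    [/\ forall e, e \in Estd n.+1 k -> dotF2 h e = 0, dotF2 h (pstar n) = 1 & dotF2 h p = 1].
  move: pE; rewrite Estd_mem negb_forall => /existsP [j]; rewrite negb_imply => /andP [hj pj].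
  have pj1 : p 0 j = 1 by case: (F2_cases (p 0 j)) pj => ->.
  have hl : (n.+1 - k <= (@ord_max n))%N by rewrite /= leq_subLR -addn1 addnC leq_add2r.
  case: (F2_cases (p 0 ord_max)) => pl.
    have jl : j != ord_max by apply/eqP => ej; move: pj1; rewrite ej pl => /eqP.
    exists (ev ord_max + ev j); split.
    - move=> e; rewrite Estd_mem => /forallP He.
      rewrite dotC dotDr !(dotC e) !dot_ev.
      by have /implyP/(_ hl)/eqP -> := He ord_max; have /implyP/(_ hj)/eqP -> := He j; rewrite addr0.
    - by rewrite dotC dotDr !(dotC (pstar n)) !dot_ev /pstar !mxE eqxx (negPf jl) addr0.
    - by rewrite dotC dotDr !(dotC p) !dot_ev pl pj1 add0r.
  exists (ev ord_max); split.
  - move=> e; rewrite Estd_mem => /forallP He.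
    by rewrite dot_ev; have /implyP/(_ hl)/eqP -> := He ord_max.
  - by rewrite dot_ev /pstar mxE eqxx.
  - by rewrite dot_ev.
pose d := p - pstar n.
have hd : dotF2 h d = 0 by rewrite /d dotBr hs hp subrr.
pose P := 1%:M + h^T *m d.
have PP : P *m P = 1%:M by exact: invol_unit.
have Pe : forall e, dotF2 h e = 0 -> e *m P = e.
  move=> e he0; rewrite /P mulmxDr mulmx1 mulmxA.
  have -> : e *m h^T = 0 by apply: mx11_eq0; rewrite -dotE dotC.
  by rewrite mul0mx addr0.
have [Pu TE] : P \in unitmx /\ Tset P 0 (Estd n.+1 k) = Estd n.+1 k.
  by apply: Estd_fix => // e /he; apply: Pe.
exists P; split=> //.
rewrite addr0 /P mulmxDr mulmx1 mulmxA.
have -> : pstar n *m h^T = 1%:M.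
  by apply/matrixP => i j; rewrite !ord1 -dotE dotC hs mxE.
by rewrite mul1mx /d addrC subrK.
Qed.
Lemma sum_ind (T : finType) (R : numFieldType) (V : T) : \sum_W ((V == W)%:R : R) = 1.
Proof.
rewrite (bigD1 V) //= eqxx big1 ?addr0 // => W /negPf; rewrite eq_sym => ->.
by [].
Qed.

Lemma Kin_mass (R : numFieldType) n k a b : (1 <= k)%N -> (k <= n)%N -> a != 0 ->
  \sum_W @Kin R n k a b W = 1.
Proof.
move=> k1 kn a0; rewrite /Kin exchange_big /=.
transitivity (\sum_(g : k.-1.-tuple 'rV['F_2]_n) @unif R _ (gamma_set k a) g *
   \sum_(bt : k.-1.-tuple 'F_2) @unif R _ [set: k.-1.-tuple 'F_2] bt).
  apply: eq_bigr => g _; rewrite exchange_big /= big_distrr /=; apply: eq_bigr => bt _.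
  by rewrite -big_distrr /= sum_ind mulr1.
rewrite sum_unif ?setT0 //; last by apply/set0Pn; exists [tuple of nseq k.-1 0]; rewrite inE.
under eq_bigr do rewrite mulr1.
case: (gamma_exists k1 kn a0) => g0 Hg0.
by rewrite sum_unif //; apply/set0Pn; exists g0; rewrite inE.
Qed.

Definition PI (R : numFieldType) n k (W : {set 'rV['F_2]_n}) : R :=
  \sum_(a : 'rV['F_2]_n) \sum_(b : 'F_2)
    @unif R _ (nonzero_vecs n) a * @unif R _ [set: 'F_2] b * @Kin R n k a b W.
Definition KB (R : numFieldType) n k (x : 'rV['F_2]_n) (e : 'F_2) (W : {set 'rV['F_2]_n}) : R :=
  \sum_(a : 'rV['F_2]_n) @unif R _ (nonzero_vecs n) a * @Kin R n k a (dotF2 a x + e) W.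

Lemma mulQ_inj n (Q : 'M['F_2]_n) : Q \in unitmx -> injective (fun a : 'rV['F_2]_n => a *m Q).
Proof. by move=> Qu; apply: (can_inj (g := fun a => a *m invmx Q)) => a; rewrite mulmxK. Qed.

Lemma addK_inv (x : 'F_2) : involutive (fun b : 'F_2 => b + x).
Proof. by move=> b /=; rewrite -addrA F2_addxx addr0. Qed.

Lemma PI_T (R : numFieldType) n k P c W : (0 < k)%N -> P \in unitmx ->
  @PI R n k (Tset P c W) = @PI R n k W.
Proof.
move=> k0 Pu; have Qu : (invmx P)^T \in unitmx by rewrite unitmx_tr unitmx_inv.
rewrite /PI (reindex_inj (mulQ_inj Qu)); apply: eq_bigr => a _ /=.
rewrite (reindex_inj (inv_inj (addK_inv (dotF2 (a *m (invmx P)^T) c)))).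
apply: eq_bigr => b _ /=; rewrite Kin_T // unif_nz //.
by rewrite /unif !inE.
Qed.

Lemma KB_T (R : numFieldType) n k P c x0 e W : (0 < k)%N -> P \in unitmx ->
  @KB R n k (x0 *m P + c) e (Tset P c W) = @KB R n k x0 e W.
Proof.
move=> k0 Pu; have Qu : (invmx P)^T \in unitmx by rewrite unitmx_tr unitmx_inv.
rewrite /KB (reindex_inj (mulQ_inj Qu)); apply: eq_bigr => a _ /=.
rewrite unif_nz // dotDr dot_mulmx -mulmxA -trmx_mul mulmxV // trmx1 mulmx1.
by rewrite addrAC Kin_T.
Qed.

Lemma Kin_supp (R : numFieldType) n k a b (W : {set 'rV['F_2]_n}) :
  ~~ is_kflat k W -> @Kin R n k a b W = 0.
Proof.
move=> nW; rewrite /Kin big1 // => g _; rewrite big1 // => bt _.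
rewrite /unif inE; case: ifP => Hg; last by rewrite !mul0r.
case: eqP => [HV|]; last by rewrite mulr0.
by move: nW; rewrite -HV V0_kflat.
Qed.

Lemma notin_V0 n k a x (g : k.-1.-tuple 'rV['F_2]_n) bt : (0 < k)%N ->
  x \notin V0 k a (dotF2 a x) g bt.
Proof.
move=> k0; rewrite inE negb_forall; apply/existsP.
have hk : (k.-1 < k)%N by rewrite prednK.
exists (Ordinal hk); rewrite /rowv /rhsv /= !nth_rcons !size_tuple ltnn eqxx.
by case: (F2_cases (dotF2 a x)) => ->.
Qed.

Lemma Kin_supp2 (R : numFieldType) n k a x (W : {set 'rV['F_2]_n}) : (0 < k)%N ->
  x \in W -> @Kin R n k a (dotF2 a x) W = 0.
Proof.
move=> k0 xW; rewrite /Kin big1 // => g _; rewrite big1 // => bt _.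
case: eqP => [HV|]; last by rewrite mulr0.
by move: xW; rewrite -HV (negPf (@notin_V0 n k a x g bt k0)).
Qed.

Lemma mass_PI (R : numFieldType) n k : (1 <= k)%N -> (k <= n)%N ->
  \sum_W @PI R n k W = 1.
Proof.
move=> k1 kn; rewrite /PI exchange_big /=.
transitivity (\sum_(a : 'rV['F_2]_n) @unif R _ (nonzero_vecs n) a *
                 \sum_(b : 'F_2) @unif R _ [set: 'F_2] b).
  apply: eq_bigr => a _; rewrite exchange_big big_distrr /=; apply: eq_bigr => b _.
  rewrite -big_distrr /=; case: (boolP (a \in nonzero_vecs n)) => an.
    by rewrite Kin_mass ?mulr1 //; rewrite inE in an.
  by rewrite /unif (negPf an) !mul0r.
rewrite sum_unif; last by apply/set0Pn; exists 0; rewrite inE.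
under eq_bigr do rewrite mulr1.
apply: sum_unif; apply/set0Pn.
have n0 : (0 < n)%N by apply: leq_trans kn.
exists (ev (Ordinal n0)); rewrite inE; apply/eqP => /rowP /(_ (Ordinal n0)).
by rewrite !mxE eqxx.
Qed.

Lemma mass_KB (R : numFieldType) n k x e : (1 <= k)%N -> (k <= n)%N ->
  \sum_W @KB R n k x e W = 1.
Proof.
move=> k1 kn; rewrite /KB exchange_big /=.
transitivity (\sum_(a : 'rV['F_2]_n) @unif R _ (nonzero_vecs n) a).
  apply: eq_bigr => a _; rewrite -big_distrr /=.
  case: (boolP (a \in nonzero_vecs n)) => an.
    by rewrite Kin_mass ?mulr1 //; rewrite inE in an.
  by rewrite /unif (negPf an) !mul0r.
apply: sum_unif; apply/set0Pn.
have n0 : (0 < n)%N by apply: leq_trans kn.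
exists (ev (Ordinal n0)); rewrite inE; apply/eqP => /rowP /(_ (Ordinal n0)).
by rewrite !mxE eqxx.
Qed.
Lemma unif_char (R : numFieldType) (T : finType) (A : {set T}) (f : T -> R) (c0 : R) :
  (forall W, f W = if W \in A then c0 else 0) -> \sum_W f W = 1 ->
  forall W, f W = @unif R T A W.
Proof.
move=> Hf Hs W; rewrite Hf /unif; case: ifP => // WA.
have : \sum_(W in A) c0 = 1.
  by rewrite -Hs big_mkcond /=; apply: eq_bigr => V _; rewrite Hf.
rewrite sumr_const => H0; have H : c0 * #|A|%:R = 1 by rewrite mulr_natr.
have N0 : (#|A|%:R : R) != 0.
  by apply/eqP => N0; move: H; rewrite N0 mulr0 => /eqP; rewrite eq_sym oner_eq0.
by rewrite -[c0](mulfK N0) H mul1r.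
Qed.

Lemma PI_val (R : numFieldType) n k W : (1 <= k)%N -> (k <= n)%N ->
  @PI R n k W = @q0 R n k W.
Proof.
move=> k1 kn; apply: (unif_char (c0 := @PI R n k (Estd n k))) W; last exact: mass_PI.
move=> V; rewrite inE; case: ifP => HV.
  by case: (kflat_std HV) => P [c [Pu ->]]; rewrite PI_T.
rewrite /PI big1 // => a _; rewrite big1 // => b _.
by rewrite Kin_supp ?mulr0 // HV.
Qed.

Lemma KB_val (R : numFieldType) n k x W : (1 <= k)%N -> (k <= n)%N ->
  @KB R n k x 0 W = @qx R n k x W.
Proof.
move=> k1 kn; case: n x W kn => [|n] x W kn; first by rewrite leqn0 in kn; move/eqP: kn k1 => ->.
apply: (unif_char (c0 := @KB R n.+1 k (pstar n) 0 (Estd n.+1 k))) W; last exact: mass_KB.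
move=> V; rewrite !inE; case: (boolP (is_kflat k V)) => HV /=; last first.
  rewrite /KB big1 // => a _.
  by rewrite Kin_supp ?mulr0.
case: (boolP (x \in V)) => xV /=; last first.
  case: (kflat_std HV) => P [c [Pu VE]].
  pose x0 := (x - c) *m invmx P.
  have xE : x = x0 *m P + c by rewrite /x0 mulmxKV // subrK.
  have x0E : x0 \notin Estd n.+1 k by move: xV; rewrite VE /Tset inE.
  rewrite VE xE KB_T //.
  case: (pstar_transitive k1 x0E) => P2 [P2u TE xE2].
  by rewrite -{1}TE -xE2 KB_T.
rewrite /KB big1 // => a _.
by rewrite addr0 Kin_supp2 ?mulr0.
Qed.
Lemma nest1 (R : numFieldType) (I T1 : finType) (F : I -> T1 -> R) :
  \sum_(f1 : {ffun I -> T1}) \prod_i F i (f1 i) = \prod_i \sum_x F i x.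
Proof. by rewrite bigA_distr_bigA. Qed.

Lemma nest2 (R : numFieldType) (I T1 T2 : finType) (F : I -> T1 -> T2 -> R) :
  \sum_(f1 : {ffun I -> T1}) \sum_(f2 : {ffun I -> T2}) \prod_i F i (f1 i) (f2 i)
  = \prod_i \sum_x1 \sum_x2 F i x1 x2.
Proof.
transitivity (\sum_(f1 : {ffun I -> T1}) \prod_i \sum_x2 F i (f1 i) x2).
  by apply: eq_bigr => f1 _; exact: (nest1 (fun i x2 => F i (f1 i) x2)).
exact: (nest1 (fun i x1 => \sum_x2 F i x1 x2)).
Qed.

Lemma nest3 (R : numFieldType) (I T1 T2 T3 : finType) (F : I -> T1 -> T2 -> T3 -> R) :
  \sum_(f1 : {ffun I -> T1}) \sum_(f2 : {ffun I -> T2}) \sum_(f3 : {ffun I -> T3})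
    \prod_i F i (f1 i) (f2 i) (f3 i)
  = \prod_i \sum_x1 \sum_x2 \sum_x3 F i x1 x2 x3.
Proof.
transitivity (\sum_(f1 : {ffun I -> T1}) \prod_i \sum_x2 \sum_x3 F i (f1 i) x2 x3).
  by apply: eq_bigr => f1 _; exact: (nest2 (fun i x2 x3 => F i (f1 i) x2 x3)).
exact: (nest1 (fun i x1 => \sum_x2 \sum_x3 F i x1 x2 x3)).
Qed.

Lemma nest4 (R : numFieldType) (I T1 T2 T3 T4 : finType)
  (F : I -> T1 -> T2 -> T3 -> T4 -> R) :
  \sum_(f1 : {ffun I -> T1}) \sum_(f2 : {ffun I -> T2}) \sum_(f3 : {ffun I -> T3})
  \sum_(f4 : {ffun I -> T4})
    \prod_i F i (f1 i) (f2 i) (f3 i) (f4 i)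
  = \prod_i \sum_x1 \sum_x2 \sum_x3 \sum_x4 F i x1 x2 x3 x4.
Proof.
transitivity (\sum_(f1 : {ffun I -> T1}) \prod_i \sum_x2 \sum_x3 \sum_x4 F i (f1 i) x2 x3 x4).
  by apply: eq_bigr => f1 _; exact: (nest3 (fun i x2 x3 x4 => F i (f1 i) x2 x3 x4)).
exact: (nest1 (fun i x1 => \sum_x2 \sum_x3 \sum_x4 F i x1 x2 x3 x4)).
Qed.

Lemma nest5 (R : numFieldType) (I T1 T2 T3 T4 T5 : finType)
  (F : I -> T1 -> T2 -> T3 -> T4 -> T5 -> R) :
  \sum_(f1 : {ffun I -> T1}) \sum_(f2 : {ffun I -> T2}) \sum_(f3 : {ffun I -> T3})
  \sum_(f4 : {ffun I -> T4}) \sum_(f5 : {ffun I -> T5})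
    \prod_i F i (f1 i) (f2 i) (f3 i) (f4 i) (f5 i)
  = \prod_i \sum_x1 \sum_x2 \sum_x3 \sum_x4 \sum_x5 F i x1 x2 x3 x4 x5.
Proof.
transitivity (\sum_(f1 : {ffun I -> T1})
   \prod_i \sum_x2 \sum_x3 \sum_x4 \sum_x5 F i (f1 i) x2 x3 x4 x5).
  by apply: eq_bigr => f1 _; exact: (nest4 (fun i x2 x3 x4 x5 => F i (f1 i) x2 x3 x4 x5)).
exact: (nest1 (fun i x1 => \sum_x2 \sum_x3 \sum_x4 \sum_x5 F i x1 x2 x3 x4 x5)).
Qed.

Lemma forall_prod (R : numFieldType) (I : finType) (P : pred I) :
  (([forall j, P j] : bool)%:R : R) = \prod_j ((P j)%:R : R).
Proof.
case: (boolP [forall j, P j]) => [/forallP H|/forallPn [j Pj]].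
  by rewrite big1 // => j _; rewrite H.
by rewrite (bigD1 j) //= (negPf Pj) mul0r.
Qed.

Lemma sum_s_unif (R : numFieldType) k (X : R) :
  \sum_(s : {perm 'I_k}) X * @unif R _ [set: {perm 'I_k}] s = X.
Proof.
rewrite -big_distrr /= sum_unif ?mulr1 //; apply/set0Pn; exists 1%g; by rewrite inE.
Qed.

Lemma unif2 (R : numFieldType) (b : 'F_2) : @unif R _ [set: 'F_2] b = 2^-1.
Proof. by rewrite /unif inE cardsT card_Fp. Qed.

Lemma perj_i (R : numFieldType) n k (W : {set 'rV['F_2]_n}) : (1 <= k)%N -> (k <= n)%N ->
  \sum_(a : 'rV['F_2]_n) \sum_(b : 'F_2) \sum_(g : k.-1.-tuple 'rV['F_2]_n)
  \sum_(bt : k.-1.-tuple 'F_2) \sum_(s : {perm 'I_k})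
    (@unif R _ (nonzero_vecs n) a * @unif R _ [set: 'F_2] b
        * @unif R _ (@gamma_set n k a) g * @unif R _ [set: k.-1.-tuple 'F_2] bt
        * @unif R _ [set: {perm 'I_k}] s) * ((@Vj n k a b g bt s == W)%:R)
  = @q0 R n k W.
Proof.
move=> k1 kn; rewrite -PI_val // /PI /Kin; apply: eq_bigr => a _; apply: eq_bigr => b _.
rewrite mulr_sumr; apply: eq_bigr => g _; rewrite mulr_sumr; apply: eq_bigr => bt _.
rewrite -[RHS](sum_s_unif k); apply: eq_bigr => s _; rewrite Vj_V0.
ring.
Qed.

Lemma perj_ii (R : numFieldType) n k x eta (W : {set 'rV['F_2]_n}) : (1 <= k)%N -> (k <= n)%N ->
  \sum_(a : 'rV['F_2]_n) \sum_(e : 'F_2) \sum_(g : k.-1.-tuple 'rV['F_2]_n)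
  \sum_(bt : k.-1.-tuple 'F_2) \sum_(s : {perm 'I_k})
    (@unif R _ (nonzero_vecs n) a * @bern R eta e
        * @unif R _ (@gamma_set n k a) g * @unif R _ [set: k.-1.-tuple 'F_2] bt
        * @unif R _ [set: {perm 'I_k}] s) * ((@Vj n k a (dotF2 a x + e) g bt s == W)%:R)
  = @qxpi R n k x (1 - 2 * eta) W.
Proof.
move=> k1 kn.
have E1 : forall a e, \sum_(g : k.-1.-tuple 'rV['F_2]_n)
  \sum_(bt : k.-1.-tuple 'F_2) \sum_(s : {perm 'I_k})
    (@unif R _ (nonzero_vecs n) a * @bern R eta e
        * @unif R _ (@gamma_set n k a) g * @unif R _ [set: k.-1.-tuple 'F_2] bt
        * @unif R _ [set: {perm 'I_k}] s) * ((@Vj n k a (dotF2 a x + e) g bt s == W)%:R)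
   = @unif R _ (nonzero_vecs n) a * @bern R eta e * @Kin R n k a (dotF2 a x + e) W.
  move=> a e; rewrite /Kin mulr_sumr; apply: eq_bigr => g _; rewrite mulr_sumr.
  apply: eq_bigr => bt _.
  rewrite -[RHS](sum_s_unif k); apply: eq_bigr => s _; rewrite Vj_V0.
  ring.
under eq_bigr do under eq_bigr do rewrite E1.
have HPI : @PI R n k W = 2^-1 * (@KB R n k x 0 W + @KB R n k x 1 W).
  rewrite /PI /KB -big_split mulr_sumr /=; apply: eq_bigr => a _.
  rewrite (reindex_inj (inv_inj (addK_inv (dotF2 a x)))) /= F2_sum !unif2.
  rewrite (addrC 0) (addrC 1); ring.
have HKB : \sum_(a : 'rV['F_2]_n) \sum_(e : 'F_2)
   @unif R _ (nonzero_vecs n) a * @bern R eta e * @Kin R n k a (dotF2 a x + e) W =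
   (1 - eta) * @KB R n k x 0 W + eta * @KB R n k x 1 W.
  rewrite /KB !mulr_sumr -big_split /=; apply: eq_bigr => a _.
  rewrite F2_sum /bern eqxx; have -> : ((0 : 'F_2) == 1) = false by [].
  ring.
rewrite HKB; move: HPI; rewrite PI_val // KB_val // /qxpi => HPI.
have -> : @KB R n k x 1 W = 2 * @q0 R n k W - @qx R n k x W.
  rewrite HPI mulrA divff ?mul1r; first ring.
  by rewrite pnatr_eq0.
ring.
Qed.
Theorem mainTheorem11 (R : realFieldType) (n k m : nat)
  (hk : (1 <= k)%N) (hkn : (k <= n)%N) (hm : (1 <= m)%N) :
  (forall W : {ffun 'I_m -> {set 'rV['F_2]_n}}, @law_i R n k m W = @P_unif R n k m W) /\
  (forall (x : 'rV['F_2]_n) (eta : R), 0 <= eta -> eta < 1 / 2 ->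
     forall W : {ffun 'I_m -> {set 'rV['F_2]_n}},
       @law_ii R n k m x eta W = @P_xpi R n k m x (1 - 2 * eta) W).
Proof.
split.
  move=> W; rewrite /law_i /P_unif.
  rewrite -[RHS](eq_bigr _ (fun j _ => perj_i R (W j) hk hkn)).
  rewrite -(nest5 (fun j a b g bt s =>
    (@unif R _ (nonzero_vecs n) a * @unif R _ [set: 'F_2] b
        * @unif R _ (@gamma_set n k a) g * @unif R _ [set: k.-1.-tuple 'F_2] bt
        * @unif R _ [set: {perm 'I_k}] s) * ((@Vj n k a b g bt s == W j)%:R))).
  apply: eq_bigr => A _; apply: eq_bigr => B _; apply: eq_bigr => G _.
  apply: eq_bigr => Bt _; apply: eq_bigr => S _.
  by rewrite (forall_prod R (fun j => @Vj n k (A j) (B j) (G j) (Bt j) (S j) == W j)) -big_split.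
move=> x eta _ _ W; rewrite /law_ii /P_xpi.
rewrite -[RHS](eq_bigr _ (fun j _ => @perj_ii R n k x eta (W j) hk hkn)).
rewrite -(nest5 (fun j a e g bt s =>
    (@unif R _ (nonzero_vecs n) a * @bern R eta e
        * @unif R _ (@gamma_set n k a) g * @unif R _ [set: k.-1.-tuple 'F_2] bt
        * @unif R _ [set: {perm 'I_k}] s) * ((@Vj n k a (dotF2 a x + e) g bt s == W j)%:R))).
apply: eq_bigr => A _; apply: eq_bigr => B _; apply: eq_bigr => G _.
apply: eq_bigr => Bt _; apply: eq_bigr => S _.
by rewrite (forall_prod R (fun j => @Vj n k (A j) (dotF2 (A j) x + B j) (G j) (Bt j) (S j) == W j)) -big_split.
Qed.
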